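(* The pair of varieties $(\mathrm{RB}\,\mathrm{As},\mathrm{pre}\,\mathrm{As})$, with the functor $\psi$ described below, is not a PBW-pair.
   Context: $\mathrm{RB}\,\mathrm{As}$ is the variety of associative algebras with a Rota–Baxter operator of weight $0$ (a linear map $R$ with $R(x)R(y)=R(R(x)y+xR(y))$); $\mathrm{pre}\,\mathrm{As}$ is the variety of preassociative algebras (vector spaces with bilinear $\succ,\prec$ satisfying $(x_1\succ x_2+x_1\prec x_2)\succ x_3 = x_1\succ (x_2 \succ x_3)$, $(x_1\succ x_2)\prec x_3=x_1\succ(x_2\prec x_3)$, $x_1\prec(x_2\succ x_3+x_2\prec x_3)=(x_1\prec x_2)\prec x_3$). The functor $\psi:\mathrm{RB}\,\mathrm{As}\to\mathrm{pre}\,\mathrm{As}$ sends an RB-algebra $(B,R)$ to the same space with $x\succ y=R(x)y$, $x\prec y=xR(y)$. Its left adjoint gives the universal enveloping RB-algebra $U(A)$ of a preassociative algebra $A$. A pair of varieties $(\mathcal V,\mathcal W)$ with such a functor $\psi$ (preserving the underlying space and changing operations) is a PBW-pair (in the sense of Mikhalev–Shestakov) if for every $A\in\mathcal W$ the associated graded algebra $\mathrm{gr}\,U(A)$ with respect to the natural ascending filtration of $U(A)$ is isomorphic to $U(\mathrm{Ab}\,A)$, where $\mathrm{Ab}\,A$ denotes the space $A$ with all operations zero. *)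

(* Defs.v *)
From HB Require Import structures.
From mathcomp Require Import all_boot all_order all_algebra.
Set Implicit Arguments. Unset Strict Implicit. Unset Printing Implicit Defensive.
Import GRing.Theory.
Local Open Scope ring_scope.

Section RBPre.
Variable K : fieldType.

Definition lin (V W : lmodType K) (f : V -> W) : Prop :=
  forall (a : K) (x y : V), f (a *: x + y) = a *: f x + f y.

Definition bilin (V : lmodType K) (m : V -> V -> V) : Prop :=
  (forall x, lin (m x)) /\ (forall y, lin (fun x => m x y)).

Definition is_RBAs (V : lmodType K) (mul : V -> V -> V) (R : V -> V) : Prop :=
  [/\ bilin mul,
      (forall x y z, mul (mul x y) z = mul x (mul y z)),
      lin R &
      (forall x y, mul (R x) (R y) = R (mul (R x) y + mul x (R y)))].

Definition is_preAs (A : lmodType K) (sc pr : A -> A -> A) : Prop :=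
  [/\ bilin sc, bilin pr,
      (forall x1 x2 x3, sc (sc x1 x2 + pr x1 x2) x3 = sc x1 (sc x2 x3)),
      (forall x1 x2 x3, pr (sc x1 x2) x3 = sc x1 (pr x2 x3)) &
      (forall x1 x2 x3, pr x1 (sc x2 x3 + pr x2 x3) = pr (pr x1 x2) x3)].

Definition psi_succ (V : lmodType K) (mul : V -> V -> V) (R : V -> V) :=
  fun x y => mul (R x) y.
Definition psi_prec (V : lmodType K) (mul : V -> V -> V) (R : V -> V) :=
  fun x y => mul x (R y).

Definition preAs_hom (A B : lmodType K) (sA pA : A -> A -> A)
  (sB pB : B -> B -> B) (f : A -> B) : Prop :=
  [/\ lin f, (forall x y, f (sA x y) = sB (f x) (f y)) &
             (forall x y, f (pA x y) = pB (f x) (f y))].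

Definition RB_hom (U B : lmodType K) (mU : U -> U -> U) (RU : U -> U)
  (mB : B -> B -> B) (RB : B -> B) (g : U -> B) : Prop :=
  [/\ lin g, (forall x y, g (mU x y) = mB (g x) (g y)) &
             (forall x, g (RU x) = RB (g x))].

Definition univ_env (A : lmodType K) (sA pA : A -> A -> A)
  (U : lmodType K) (mU : U -> U -> U) (RU : U -> U) (iota : A -> U) : Prop :=
  [/\ is_RBAs mU RU,
      preAs_hom sA pA (psi_succ mU RU) (psi_prec mU RU) iota &
      forall (B : lmodType K) (mB : B -> B -> B) (RB : B -> B) (f : A -> B),
        is_RBAs mB RB ->
        preAs_hom sA pA (psi_succ mB RB) (psi_prec mB RB) f ->
        (exists g : U -> B, RB_hom mU RU mB RB g /\ forall a, g (iota a) = f a) /\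
        (forall g1 g2 : U -> B,
           RB_hom mU RU mB RB g1 -> (forall a, g1 (iota a) = f a) ->
           RB_hom mU RU mB RB g2 -> (forall a, g2 (iota a) = f a) ->
           forall x, g1 x = g2 x)].

Section Filtration.
Variables (A U : lmodType K) (mU : U -> U -> U) (RU : U -> U) (iota : A -> U).

Inductive mono : nat -> U -> Prop :=
| mono_gen (a : A) : mono 1 (iota a)
| mono_mul n m x y : mono n x -> mono m y -> mono (n + m) (mU x y)
| mono_R n x : mono n x -> mono n (RU x).

Inductive filt (n : nat) : U -> Prop :=
| filt_zero : filt n 0
| filt_mono k x : (k <= n)%N -> mono k x -> filt n x
| filt_comb (a : K) x y : filt n x -> filt n y -> filt n (a *: x + y).

(* gr U = (+)_n F_n / F_(n-1), elements represented by sequences g with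
   g n in F_n and g n = 0 for n large; equality modulo F_(n-1) componentwise *)
Definition gr_elem (g : nat -> U) : Prop :=
  (forall n, filt n (g n)) /\ exists N, forall n, (N < n)%N -> g n = 0.

Definition gr_eq (g h : nat -> U) : Prop := forall n, filt n.-1 (g n - h n).

Definition gr_mul (g h : nat -> U) : nat -> U :=
  fun k => \sum_(i < k.+1) mU (g i) (h (k - i)%N).

Definition gr_R (g : nat -> U) : nat -> U := fun n => RU (g n).

Definition gr_iso (U' : lmodType K) (mU' : U' -> U' -> U') (RU' : U' -> U')
  (Phi : U' -> nat -> U) : Prop :=
  (forall x, gr_elem (Phi x)) /\
  (forall a x y, gr_eq (Phi (a *: x + y)) (fun n => a *: Phi x n + Phi y n)) /\
  (forall x y, gr_eq (Phi (mU' x y)) (gr_mul (Phi x) (Phi y))) /\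
  (forall x, gr_eq (Phi (RU' x)) (gr_R (Phi x))) /\
  (forall x, gr_eq (Phi x) (fun _ => 0) -> x = 0) /\
  (forall g, gr_elem g -> exists x, gr_eq (Phi x) g).

End Filtration.

(* (RB As, pre As) is a PBW-pair: for every preassociative A,
   gr U(A) is isomorphic to U(Ab A) *)
Definition PBW_pair_RBAs_preAs : Prop :=
  forall (A : lmodType K) (sA pA : A -> A -> A), is_preAs sA pA ->
  forall (U : lmodType K) (mU : U -> U -> U) (RU : U -> U) (iota : A -> U),
    univ_env sA pA mU RU iota ->
  forall (U' : lmodType K) (mU' : U' -> U' -> U') (RU' : U' -> U') (iota' : A -> U'),
    univ_env (fun _ _ => 0) (fun _ _ => 0) mU' RU' iota' ->
  exists Phi : U' -> nat -> U, gr_iso mU RU iota mU' RU' Phi.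

End RBPre.

(* Main.v *)
From HB Require Import structures.
From mathcomp Require Import all_boot all_order all_algebra.
From mathcomp Require Import boolp zify.
Require Import Defs.
Set Implicit Arguments. Unset Strict Implicit. Unset Printing Implicit Defensive.
Import GRing.Theory.
Local Open Scope ring_scope.

Section Free.
Variables (K : fieldType) (A : lmodType K) (sc pr : A -> A -> A).

Inductive term := Gen of A | Zero | Add of term & term | Scl of K & term
  | Mul of term & term | Rop of term.

Inductive eqv : term -> term -> Prop :=
| ev_refl t : eqv t t
| ev_sym t u : eqv t u -> eqv u t
| ev_trans t u v : eqv t u -> eqv u v -> eqv t v
| ev_add t t' u u' : eqv t t' -> eqv u u' -> eqv (Add t u) (Add t' u')
| ev_scl c t t' : eqv t t' -> eqv (Scl c t) (Scl c t')
| ev_mul t t' u u' : eqv t t' -> eqv u u' -> eqv (Mul t u) (Mul t' u')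
| ev_rop t t' : eqv t t' -> eqv (Rop t) (Rop t')
| ev_addA t u v : eqv (Add t (Add u v)) (Add (Add t u) v)
| ev_addC t u : eqv (Add t u) (Add u t)
| ev_add0 t : eqv (Add Zero t) t
| ev_addN t : eqv (Add (Scl (-1) t) t) Zero
| ev_sclA a b t : eqv (Scl a (Scl b t)) (Scl (a*b) t)
| ev_scl1 t : eqv (Scl 1 t) t
| ev_sclDr a t u : eqv (Scl a (Add t u)) (Add (Scl a t) (Scl a u))
| ev_sclDl a b t : eqv (Scl (a+b) t) (Add (Scl a t) (Scl b t))
| ev_mulDl t u v : eqv (Mul (Add t u) v) (Add (Mul t v) (Mul u v))
| ev_mulDr t u v : eqv (Mul t (Add u v)) (Add (Mul t u) (Mul t v))
| ev_mulZl a t u : eqv (Mul (Scl a t) u) (Scl a (Mul t u))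
| ev_mulZr a t u : eqv (Mul t (Scl a u)) (Scl a (Mul t u))
| ev_mulA t u v : eqv (Mul (Mul t u) v) (Mul t (Mul u v))
| ev_ropD t u : eqv (Rop (Add t u)) (Add (Rop t) (Rop u))
| ev_ropZ a t : eqv (Rop (Scl a t)) (Scl a (Rop t))
| ev_rb t u : eqv (Mul (Rop t) (Rop u))
                  (Rop (Add (Mul (Rop t) u) (Mul t (Rop u))))
| ev_gen a b c : eqv (Gen (a *: b + c)) (Add (Scl a (Gen b)) (Gen c))
| ev_sc a b : eqv (Gen (sc a b)) (Mul (Rop (Gen a)) (Gen b))
| ev_pr a b : eqv (Gen (pr a b)) (Mul (Gen a) (Rop (Gen b))).

Definition FU := {P : term -> Prop | exists t, P = eqv t}.
HB.instance Definition _ := gen_eqMixin FU.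
HB.instance Definition _ := gen_choiceMixin FU.

Definition cls (t : term) : FU := exist _ (eqv t) (ex_intro _ t erefl).

Lemma eqv_cls t u : eqv t u -> cls t = cls u.
Proof.
move=> h; apply: eq_exist; apply: funext => v; apply: propext; split => e.
  exact: ev_trans (ev_sym h) e.
exact: ev_trans h e.
Qed.

Lemma cls_eqv t u : cls t = cls u -> eqv t u.
Proof.
move=> /(congr1 (@proj1_sig _ _)) /= e.
by rewrite e; exact: ev_refl.
Qed.

Definition repr (x : FU) : term := projT1 (cid (proj2_sig x)).

Lemma reprK x : cls (repr x) = x.
Proof.
rewrite /repr; case: (cid _) => t /= e.
by case: x e => P pP /= e; apply: eq_exist.
Qed.

Lemma repr_cls t : eqv (repr (cls t)) t.
Proof. by apply: cls_eqv; rewrite reprK. Qed.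

Lemma clsP (P : FU -> Prop) : (forall t, P (cls t)) -> forall x, P x.
Proof. by move=> h x; rewrite -(reprK x). Qed.

Definition fzero := cls Zero.
Fact fkey : unit. Proof. exact: tt. Qed.
Definition fadd := locked_with fkey (fun x y => cls (Add (repr x) (repr y))).
Definition fscl := locked_with fkey (fun c x => cls (Scl c (repr x))).
Definition fopp x := fscl (-1) x.
Definition fmul := locked_with fkey (fun x y => cls (Mul (repr x) (repr y))).
Definition fR := locked_with fkey (fun x => cls (Rop (repr x))).

Lemma faddE t u : fadd (cls t) (cls u) = cls (Add t u).
Proof. by rewrite [fadd]unlock; apply: eqv_cls; apply: ev_add; apply: repr_cls. Qed.
Lemma fsclE c t : fscl c (cls t) = cls (Scl c t).
Proof. by rewrite [fscl]unlock; apply: eqv_cls; apply: ev_scl; apply: repr_cls. Qed.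
Lemma fmulE t u : fmul (cls t) (cls u) = cls (Mul t u).
Proof. by rewrite [fmul]unlock; apply: eqv_cls; apply: ev_mul; apply: repr_cls. Qed.
Lemma fRE t : fR (cls t) = cls (Rop t).
Proof. by rewrite [fR]unlock; apply: eqv_cls; apply: ev_rop; apply: repr_cls. Qed.

Lemma faddA : associative fadd.
Proof.
elim/clsP => t; elim/clsP => u; elim/clsP => v.
by rewrite !faddE; apply: eqv_cls; apply: ev_addA.
Qed.
Lemma faddC : commutative fadd.
Proof. by elim/clsP => t; elim/clsP => u; rewrite !faddE; apply: eqv_cls; apply: ev_addC. Qed.
Lemma fadd0 : left_id fzero fadd.
Proof. by elim/clsP => t; rewrite faddE; apply: eqv_cls; apply: ev_add0. Qed.
Lemma faddN : left_inverse fzero fopp fadd.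
Proof. by elim/clsP => t; rewrite /fopp fsclE faddE; apply: eqv_cls; apply: ev_addN. Qed.

HB.instance Definition _ := GRing.isZmodule.Build FU faddA faddC fadd0 faddN.
Lemma addE (x y : FU) : x + y = fadd x y. Proof. by []. Qed.

Lemma fsclA a b v : fscl a (fscl b v) = fscl (a * b) v.
Proof. by elim/clsP: v => t; rewrite !fsclE; apply: eqv_cls; apply: ev_sclA. Qed.
Lemma fscl1 : left_id 1 fscl.
Proof. by elim/clsP => t; rewrite !fsclE; apply: eqv_cls; apply: ev_scl1. Qed.
Lemma fsclDr : right_distributive fscl +%R.
Proof.
move=> a; elim/clsP => t; elim/clsP => u.
by rewrite !addE !faddE !fsclE !faddE; apply: eqv_cls; apply: ev_sclDr.
Qed.
Lemma fsclDl v : {morph fscl^~ v: a b / a + b}.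
Proof.
elim/clsP: v => t a b.
by rewrite !addE !fsclE faddE; apply: eqv_cls; apply: ev_sclDl.
Qed.

HB.instance Definition _ := GRing.Zmodule_isLmodule.Build K FU fsclA fscl1 fsclDr fsclDl.

Lemma sclE c (x : FU) : c *: x = fscl c x. Proof. by []. Qed.
Lemma zeroE : (0 : FU) = fzero. Proof. by []. Qed.

Definition fiota (a : A) : FU := cls (Gen a).


Lemma lin0 (V W : lmodType K) (h : V -> W) : lin h -> h 0 = 0.
Proof.
move=> hl; have := hl 1 0 0; rewrite !scale1r !addr0 => e.
by apply: (addrI (h 0)); rewrite addr0 -e.
Qed.
Lemma linD (V W : lmodType K) (h : V -> W) : lin h -> forall x y, h (x + y) = h x + h y.
Proof. by move=> hl x y; have := hl 1 x y; rewrite !scale1r. Qed.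
Lemma linZ (V W : lmodType K) (h : V -> W) : lin h -> forall a x, h (a *: x) = a *: h x.
Proof. by move=> hl a x; have := hl a x 0; rewrite !addr0 (lin0 hl) addr0. Qed.
Lemma linB (V W : lmodType K) (h : V -> W) : lin h -> forall x y, h (x - y) = h x - h y.
Proof. by move=> hl x y; rewrite linD // -scaleN1r linZ // scaleN1r. Qed.

Lemma fzeroE : (0 : FU) = cls Zero. Proof. by []. Qed.

Ltac cl := rewrite ?addE ?sclE ?fmulE ?fRE ?faddE ?fsclE ?fmulE ?fRE ?faddE ?fsclE ?fmulE ?fRE ?faddE ?fsclE ?fmulE ?fRE ?faddE; apply: eqv_cls.

Lemma fbilin : bilin fmul.
Proof.
split.
  elim/clsP => t a; elim/clsP => u; elim/clsP => v; cl.
  apply: ev_trans (ev_mulDr _ _ _) _; apply: ev_add; [exact: ev_mulZr|exact: ev_refl].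
move=> v0 a x y; elim/clsP: v0 => v; elim/clsP: x => t; elim/clsP: y => u; cl.
apply: ev_trans (ev_mulDl _ _ _) _; apply: ev_add; [exact: ev_mulZl|exact: ev_refl].
Qed.

Lemma fRlin : lin fR.
Proof.
move=> a; elim/clsP => t; elim/clsP => u; cl.
apply: ev_trans (ev_ropD _ _) _; apply: ev_add; [exact: ev_ropZ|exact: ev_refl].
Qed.

Lemma fRBAs : is_RBAs fmul fR.
Proof.
split; [exact: fbilin| | exact: fRlin|].
  by elim/clsP => t; elim/clsP => u; elim/clsP => v; cl; apply: ev_mulA.
by elim/clsP => t; elim/clsP => u; cl; apply: ev_rb.
Qed.

Lemma fiota_hom : preAs_hom sc pr (psi_succ fmul fR) (psi_prec fmul fR) fiota.
Proof.
split.
- move=> a b c; rewrite /fiota; cl; exact: ev_gen.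
- move=> a b; rewrite /psi_succ /fiota; cl; exact: ev_sc.
- move=> a b; rewrite /psi_prec /fiota; cl; exact: ev_pr.
Qed.

Section Eval.
Variables (B : lmodType K) (mB : B -> B -> B) (RB : B -> B) (f : A -> B).
Hypothesis (HB : is_RBAs mB RB)
  (Hf : preAs_hom sc pr (psi_succ mB RB) (psi_prec mB RB) f).

Fixpoint ev t := match t with
  | Gen a => f a | Zero => 0 | Add t u => ev t + ev u | Scl c t => c *: ev t
  | Mul t u => mB (ev t) (ev u) | Rop t => RB (ev t) end.

Lemma ev_eqv t u : eqv t u -> ev t = ev u.
Proof.
case: HB => [[bl br] mA Rl rb]; case: Hf => fl fs fp.
elim; intros; simpl; try congruence.
all: first [ by rewrite addrA | by rewrite addrC | by rewrite add0r
  | by rewrite scaleN1r addNr | by rewrite scalerA | by rewrite scale1r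
  | by rewrite scalerDr | by rewrite scalerDl | by rewrite (linD (br _))
  | by rewrite (linD (bl _)) | by rewrite (linZ (br _)) | by rewrite (linZ (bl _))
  | by rewrite mA | by rewrite (linD Rl) | by rewrite (linZ Rl) | by rewrite rb
  | by rewrite fl | by rewrite fs | by rewrite fp ].
Qed.

Definition gev (x : FU) := ev (repr x).
Lemma gevE t : gev (cls t) = ev t.
Proof. exact/ev_eqv/repr_cls. Qed.

Lemma gev_hom : RB_hom fmul fR mB RB gev.
Proof.
split.
- by move=> a; elim/clsP => t; elim/clsP => u; rewrite addE sclE fsclE faddE !gevE.
- by elim/clsP => t; elim/clsP => u; rewrite fmulE !gevE.
- by elim/clsP => t; rewrite fRE !gevE.
Qed.

End Eval.

Lemma free_univ : univ_env sc pr fmul fR fiota.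
Proof.
split; [exact: fRBAs|exact: fiota_hom|].
move=> B mB RB f HB Hf; split.
  exists (gev mB RB f); split; first exact: gev_hom.
  by move=> a; rewrite /fiota gevE.
move=> g1 g2 [l1 m1 r1] e1 [l2 m2 r2] e2; elim/clsP => t.
elim: t.
- by move=> a; rewrite -/(fiota a) e1 e2.
- by rewrite -fzeroE (lin0 l1) (lin0 l2).
- by move=> t IHt u IHu; rewrite -faddE -addE (linD l1) (linD l2) IHt IHu.
- by move=> c t IH; rewrite -fsclE -sclE (linZ l1) (linZ l2) IH.
- by move=> t IHt u IHu; rewrite -fmulE m1 m2 IHt IHu.
- by move=> t IH; rewrite -fRE r1 r2 IH.
Qed.

End Free.

Section Filt.
Variables (K : fieldType) (A U : lmodType K) (mU : U -> U -> U) (RU : U -> U)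
  (iota : A -> U).
Hypothesis HU : is_RBAs mU RU.

Local Notation F := (filt mU RU iota).
Local Notation M := (mono mU RU iota).

Lemma mono_gt0 n x : M n x -> (0 < n)%N.
Proof. by elim=> // n0 m0 x0 y0 _ h1 _ h2; rewrite addn_gt0 h1. Qed.

Lemma filt_le m n x : F m x -> (m <= n)%N -> F n x.
Proof.
move=> h le; elim: h.
- exact: filt_zero.
- by move=> k y hk hy; apply: (filt_mono (leq_trans hk le) hy).
- by move=> a y z _ hy _ hz; apply: filt_comb.
Qed.

Lemma filt0 x : F 0 x -> x = 0.
Proof.
elim=> //.
- by move=> k y hk /mono_gt0; rewrite lt0n; move: hk; rewrite leqn0 => /eqP ->.
- by move=> a y z _ -> _ ->; rewrite scaler0 addr0.
Qed.

Lemma filtD n x y : F n x -> F n y -> F n (x + y).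
Proof. by move=> hx hy; have := filt_comb 1 hx hy; rewrite scale1r. Qed.
Lemma filtZ n a x : F n x -> F n (a *: x).
Proof. by move=> hx; have := filt_comb a hx (filt_zero _ _ _ _); rewrite addr0. Qed.
Lemma filtN n x : F n x -> F n (- x).
Proof. by move=> hx; rewrite -scaleN1r; apply: filtZ. Qed.
Lemma filtB n x y : F n x -> F n y -> F n (x - y).
Proof. by move=> hx hy; apply: filtD => //; apply: filtN. Qed.
Lemma filt_sum n m (G : 'I_m -> U) : (forall i, F n (G i)) -> F n (\sum_(i < m) G i).
Proof.
move=> h; elim/big_ind: _ => //; first exact: filt_zero.
by move=> x y; apply: filtD.
Qed.

Lemma filt_mul a b u v : F a u -> F b v -> F (a + b) (mU u v).
Proof.
case: HU => [[bl br] _ _ _].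
move=> hu; elim: hu v.
- by move=> v _; rewrite (lin0 (br _)); apply: filt_zero.
- move=> k x hk hx v hv; elim: hv.
  + by rewrite (lin0 (bl _)); apply: filt_zero.
  + move=> l y hl hy; apply: (filt_mono _ (mono_mul hx hy)).
    exact: leq_add.
  + by move=> c y z _ hy _ hz; rewrite (bl _ c y z); apply: filt_comb.
- by move=> c x y _ hx _ hy v hv; rewrite (br _ c x y); apply: filt_comb; auto.
Qed.

Lemma filt_R n x : F n x -> F n (RU x).
Proof.
case: HU => [_ _ Rl _].
elim.
- by rewrite (lin0 Rl); apply: filt_zero.
- by move=> k y hk hy; apply: (filt_mono hk (mono_R hy)).
- by move=> c y z _ hy _ hz; rewrite Rl; apply: filt_comb.
Qed.

Lemma mono_filt n x : M n x -> F n x.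
Proof. by move=> h; apply: filt_mono h. Qed.

End Filt.

Section Model.
Variable K : fieldType.
Definition Bm := 'rV[K]_2.
Definition eB : Bm := delta_mx ord0 ord0.
Definition fB : Bm := delta_mx ord0 ord_max.
Definition mB (u v : Bm) : Bm := (u ord0 ord0 * v ord0 ord0) *: fB.
Definition RB (u : Bm) : Bm := 0.

Lemma fB00 : fB ord0 ord0 = 0. Proof. by rewrite /fB mxE. Qed.
Lemma mB00 u v : mB u v ord0 ord0 = 0. Proof. by rewrite /mB mxE fB00 mulr0. Qed.
Lemma mBA1 x y z : mB (mB x y) z = 0. Proof. by rewrite /mB mB00 mul0r scale0r. Qed.
Lemma mBA2 x y z : mB x (mB y z) = 0. Proof. by rewrite /mB mB00 mulr0 scale0r. Qed.
Lemma mB0l x : mB 0 x = 0. Proof. by rewrite /mB mxE mul0r scale0r. Qed.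
Lemma mB0r x : mB x 0 = 0. Proof. by rewrite /mB mxE mulr0 scale0r. Qed.

Lemma B_RB : is_RBAs mB RB.
Proof.
split.
- split.
  + move=> x a y z; rewrite /mB !mxE mulrDr scalerDl scalerA; congr (_ *: _ + _).
    by rewrite mulrCA.
  + by move=> y a x z; rewrite /mB !mxE mulrDl scalerDl scalerA mulrA.
- by move=> x y z; rewrite mBA1 mBA2.
- by move=> a x y; rewrite /RB scaler0 addr0.
- by move=> x y; rewrite /RB mB0l.
Qed.

Lemma eBff : mB eB eB = fB.
Proof. by rewrite /mB /eB mxE mulr1 scale1r. Qed.

Lemma fB_neq0 : fB != 0.
Proof. by apply/eqP => /matrixP /(_ ord0 ord_max); rewrite !mxE /=; apply/eqP; rewrite oner_eq0. Qed.
End Model.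

Section Arg.
Variable K : fieldType.
Definition sc0 (a b : K^o) : K^o := (a * b : K).
Definition pr0 (a b : K^o) : K^o := 0.

Variables (U : lmodType K) (mU : U -> U -> U) (RU : U -> U) (iota : K^o -> U).
Hypothesis HU : univ_env sc0 pr0 mU RU iota.
Variables (U' : lmodType K) (mU' : U' -> U' -> U') (RU' : U' -> U') (iota' : K^o -> U').
Variable Phi : U' -> nat -> U.
Hypothesis HP : gr_iso mU RU iota mU' RU' Phi.
Variable g : U' -> Bm K.
Hypothesis Hg : RB_hom mU' RU' (@mB K) (@RB K) g.

Local Notation F := (filt mU RU iota).
Local Notation M := (mono mU RU iota).
Local Notation geq := (gr_eq mU RU iota).

Lemma HRB : is_RBAs mU RU. Proof. by case: HU. Qed.

Definition bnd (k : nat -> U) := forall n, F n (k n).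

Lemma geq_refl k : geq k k.
Proof. by move=> n; rewrite subrr; apply: filt_zero. Qed.
Lemma geq_ext k k' : (forall n, k n = k' n) -> geq k k'.
Proof. by move=> e n; rewrite e subrr; apply: filt_zero. Qed.
Lemma geq_sym k k' : geq k k' -> geq k' k.
Proof. by move=> h n; rewrite -opprB; apply: filtN. Qed.
Lemma geq_trans k1 k2 k3 : geq k1 k2 -> geq k2 k3 -> geq k1 k3.
Proof.
move=> h1 h2 n; have -> : k1 n - k3 n = (k1 n - k2 n) + (k2 n - k3 n).
  by rewrite addrA subrK.
exact: filtD.
Qed.
Lemma geq_comb a k k' l l' : geq k k' -> geq l l' ->
  geq (fun n => a *: k n + l n) (fun n => a *: k' n + l' n).
Proof.
move=> h1 h2 n; have -> : a *: k n + l n - (a *: k' n + l' n) =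
   a *: (k n - k' n) + (l n - l' n).
  by rewrite scalerBr opprD addrACA.
by apply: filt_comb.
Qed.

Lemma geq_mul k k' l l' : bnd k' -> bnd l -> geq k k' -> geq l l' ->
  geq (gr_mul mU k l) (gr_mul mU k' l').
Proof.
case: HRB => [[bl br] _ _ _].
move=> bk bl' hk hl n; rewrite /gr_mul -sumrB; apply: filt_sum => i.
have -> : mU (k i) (l (n - i)%N) - mU (k' i) (l' (n - i)%N) =
  mU (k i - k' i) (l (n - i)%N) + mU (k' i) (l (n - i)%N - l' (n - i)%N).
  by rewrite (linB (br _)) (linB (bl _)) addrA subrK.
have ltin : (i <= n)%N by rewrite -ltnS.
apply: filtD.
  have := hk i; case: (posnP i) => [-> /= /filt0 -> | ip hki].
    by rewrite (lin0 (br _)); apply: filt_zero.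
  apply: filt_le (filt_mul HRB hki (bl' (n - i)%N)) _.
  by move: ip ltin; clear; lia.
have := hl (n - i)%N; case: (posnP (n - i)%N) => [-> /= /filt0 -> | ip hli].
  by rewrite (lin0 (bl _)); apply: filt_zero.
apply: filt_le (filt_mul HRB (bk i) hli) _.
by move: ip ltin; clear; lia.
Qed.

Lemma geq_R k k' : geq k k' -> geq (gr_R RU k) (gr_R RU k').
Proof.
case: HRB => [_ _ Rl _].
by move=> h n; rewrite /gr_R -(linB Rl); apply: (filt_R HRB).
Qed.

Lemma bnd_mul k l : bnd k -> bnd l -> bnd (gr_mul mU k l).
Proof.
move=> bk bl n; rewrite /gr_mul; apply: filt_sum => i.
apply: filt_le (filt_mul HRB (bk i) (bl _)) _.
by rewrite subnKC // -ltnS.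
Qed.

Lemma bnd_R k : bnd k -> bnd (gr_R RU k).
Proof. by move=> bk n; apply: (filt_R HRB). Qed.


Lemma P_elem x : gr_elem mU RU iota (Phi x). Proof. by case: HP. Qed.
Lemma P_bnd x : bnd (Phi x). Proof. by case: (P_elem x). Qed.
Lemma P_lin a x y : geq (Phi (a *: x + y)) (fun n => a *: Phi x n + Phi y n).
Proof. by case: HP => _ [h _]. Qed.
Lemma P_mul x y : geq (Phi (mU' x y)) (gr_mul mU (Phi x) (Phi y)).
Proof. by case: HP => _ [_ [h _]]. Qed.
Lemma P_R x : geq (Phi (RU' x)) (gr_R RU (Phi x)).
Proof. by case: HP => _ [_ [_ [h _]]]. Qed.
Lemma P_inj x : geq (Phi x) (fun _ => 0) -> x = 0.
Proof. by case: HP => _ [_ [_ [_ [h _]]]]; apply: h. Qed.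
Lemma P_surj k : gr_elem mU RU iota k -> exists x, geq (Phi x) k.
Proof. by case: HP => _ [_ [_ [_ [_ h]]]]; apply: h. Qed.

Lemma P_0 : geq (Phi 0) (fun _ => 0).
Proof.
have := P_lin (-1) 0 0; rewrite scaler0 addr0 => h; apply: geq_trans h _.
by apply: geq_ext => n; rewrite scaleN1r addNr.
Qed.

Lemma P_mul' x1 x2 k1 k2 : bnd k1 -> geq (Phi x1) k1 -> geq (Phi x2) k2 ->
  geq (Phi (mU' x1 x2)) (gr_mul mU k1 k2).
Proof.
move=> b1 h1 h2; apply: geq_trans (P_mul _ _) _.
exact: geq_mul b1 (P_bnd x2) h1 h2.
Qed.

Lemma P_R' x k : geq (Phi x) k -> geq (Phi (RU' x)) (gr_R RU k).
Proof. by move=> h; apply: geq_trans (P_R _) (geq_R h). Qed.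

Definition Z k := exists x, geq (Phi x) k /\ g x = 0.

Lemma Z_eq k k' : Z k -> geq k k' -> Z k'.
Proof. by move=> [x [h1 h2]] h; exists x; split=> //; apply: geq_trans h1 h. Qed.

Lemma Z0 : Z (fun _ => 0).
Proof. by exists 0; split; [exact: P_0|case: Hg => l _ _; apply: lin0]. Qed.

Lemma Z_comb a k l : Z k -> Z l -> Z (fun n => a *: k n + l n).
Proof.
move=> [x1 [h1 g1]] [x2 [h2 g2]]; exists (a *: x1 + x2); split.
  exact: geq_trans (P_lin _ _ _) (geq_comb _ h1 h2).
by case: Hg => lg _ _; rewrite lg g1 g2 scaler0 addr0.
Qed.

Lemma Z_sum m (G : 'I_m -> nat -> U) : (forall i, Z (G i)) ->
  Z (fun n => \sum_(i < m) G i n).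
Proof.
elim: m G => [|m IH] G h.
  by apply: Z_eq Z0 _; apply: geq_ext => n; rewrite big_ord0.
have := Z_comb 1 (IH (fun i => G (widen_ord (leqnSn m) i)) (fun i => h _)) (h ord_max).
by move=> hz; apply: Z_eq hz _; apply: geq_ext => n; rewrite scale1r big_ord_recr.
Qed.

Definition dl (i : nat) (u : U) : nat -> U := fun n => if n == i then u else 0.

Lemma dl_elem i u : F i u -> gr_elem mU RU iota (dl i u).
Proof.
move=> h; split.
  by move=> n; rewrite /dl; case: eqP => [->|_] //; apply: filt_zero.
by exists i => n lt; rewrite /dl; case: eqP => // e; move: lt; rewrite e ltnn.
Qed.
Lemma dl_bnd i u : F i u -> bnd (dl i u).
Proof. by move=> h; case: (dl_elem h). Qed.

Lemma sum_if m n (c : U) :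
  \sum_(t < m) (if (t : nat) == n then c else 0) = if (n < m)%N then c else 0.
Proof.
elim: m => [|m IH]; first by rewrite big_ord0.
rewrite big_ord_recr /= IH.
case: (ltngtP n m) => [lt|gt|->].
- by rewrite addr0 ltnS (ltnW lt).
- by rewrite addr0 ltnS leqNgt gt.
- by rewrite add0r ltnSn.
Qed.

Lemma gr_mul_dl i j u v : gr_mul mU (dl i u) (dl j v) = dl (i + j) (mU u v).
Proof.
case: HRB => [[bl br] _ _ _].
apply: funext => n; rewrite /gr_mul.
have teq : forall t : 'I_n.+1, mU (dl i u t) (dl j v (n - t)%N) =
    if (t : nat) == i then (if n == (i + j)%N then mU u v else 0) else 0.
  move=> t; rewrite /dl; case: (eqVneq (t : nat) i) => [e|ne]; last by rewrite (lin0 (br _)).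
  have tn : (t <= n)%N by rewrite -ltnS ltn_ord.
  have -> : (n - t == j)%N = (n == i + j)%N.
    by apply/idP/idP => /eqP hh; apply/eqP; move: hh tn; rewrite e; clear; lia.
  by case: (n == i + j)%N; rewrite ?(lin0 (bl _)).
rewrite (eq_bigr _ (fun t _ => teq t)) sum_if /dl.
case: eqP => [->|_]; last by case: ifP. by rewrite ltnS leq_addr.
Qed.

Lemma gr_R_dl j v : gr_R RU (dl j v) = dl j (RU v).
Proof.
case: HRB => [_ _ Rl _].
by apply: funext => n; rewrite /gr_R /dl; case: eqP => // _; rewrite (lin0 Rl).
Qed.

Lemma dl0 i : dl i 0 = (fun _ => 0).
Proof. by apply: funext => n; rewrite /dl; case: eqP. Qed.

Lemma pre i p : F i p -> exists z, geq (Phi z) (dl i p).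
Proof. by move=> h; apply: P_surj; apply: dl_elem. Qed.

Lemma gB0 x : g x = 0 -> True. Proof. by []. Qed.

Lemma case_Rl i j p q : F i p -> F j q -> Z (dl (i + j) (mU (RU p) q)).
Proof.
move=> hp hq; have [z1 h1] := pre hp; have [z2 h2] := pre hq.
exists (mU' (RU' z1) z2); split.
  rewrite -gr_mul_dl -gr_R_dl; apply: P_mul' h2.
    exact: bnd_R (dl_bnd hp).
  exact: P_R'.
by case: Hg => _ m r; rewrite m r /RB mB0l.
Qed.

Lemma case_Rr i j p q : F i p -> F j q -> Z (dl (i + j) (mU p (RU q))).
Proof.
move=> hp hq; have [z1 h1] := pre hp; have [z2 h2] := pre hq.
exists (mU' z1 (RU' z2)); split.
  rewrite -gr_mul_dl -gr_R_dl; apply: P_mul' h1 _.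
    exact: dl_bnd hp.
  exact: P_R'.
by case: Hg => _ m r; rewrite m r /RB mB0r.
Qed.

Lemma case_Ml i1 i2 j p1 p2 q : F i1 p1 -> F i2 p2 -> F j q ->
  Z (dl (i1 + i2 + j) (mU (mU p1 p2) q)).
Proof.
move=> hp1 hp2 hq; have [z1 h1] := pre hp1; have [z2 h2] := pre hp2.
have [z3 h3] := pre hq.
exists (mU' (mU' z1 z2) z3); split.
  rewrite -gr_mul_dl; apply: P_mul' h3.
    exact/dl_bnd/(filt_mul HRB).
  by rewrite -gr_mul_dl; apply: P_mul' h2 => //; apply: dl_bnd.
by case: Hg => _ m r; rewrite !m mBA1.
Qed.

Lemma case_Mr i j1 j2 p q1 q2 : F i p -> F j1 q1 -> F j2 q2 ->
  Z (dl (i + (j1 + j2)) (mU p (mU q1 q2))).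
Proof.
move=> hp hq1 hq2; have [z1 h1] := pre hp; have [z2 h2] := pre hq1.
have [z3 h3] := pre hq2.
exists (mU' z1 (mU' z2 z3)); split.
  rewrite -gr_mul_dl; apply: P_mul' h1 _.
    exact/dl_bnd.
  by rewrite -gr_mul_dl; apply: P_mul' h3 => //; apply: dl_bnd.
by case: Hg => _ m r; rewrite !m mBA2.
Qed.


Lemma iota_sq a b : mU (iota a) (iota b) = 0.
Proof.
case: HU => [[[bl br] mA _ _] [il isc ip] _].
have -> : iota b = mU (RU (iota 1)) (iota b).
  by have := isc 1 b; rewrite /sc0 /psi_succ mul1r.
rewrite -mA; have := ip a 1; rewrite /psi_prec => <-; rewrite /pr0 (lin0 il) (lin0 (br _)).
by [].
Qed.

Lemma ZM i p j q : M i p -> M j q -> Z (dl (i + j) (mU p q)).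
Proof.
move=> hp hq; case: hq.
- move=> b; case: hp.
  + by move=> a; rewrite iota_sq dl0; apply: Z0.
  + move=> n m x y hx hy; apply: case_Ml; apply: mono_filt; first [eassumption|exact: mono_gen].
  + move=> n x hx; apply: case_Rl; apply: mono_filt; first [eassumption|exact: mono_gen].
- move=> n m x y hx hy; apply: case_Mr; apply: mono_filt; first [eassumption|exact: mono_gen].
- move=> n x hx; apply: case_Rr; apply: mono_filt; first [eassumption|exact: mono_gen].
Qed.

Lemma dl_comb i c x y : dl i (c *: x + y) = (fun n => c *: dl i x n + dl i y n).
Proof. by apply: funext => n; rewrite /dl; case: eqP; rewrite ?scaler0 ?addr0. Qed.

Lemma dl_low i w : F i.-1 w -> Z (dl i w).
Proof.
move=> h; apply: Z_eq Z0 _ => n; rewrite /dl; case: eqP => [->|_].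
  by rewrite sub0r; apply: filtN.
by rewrite subr0; apply: filt_zero.
Qed.

Lemma ZD i j u v : F i u -> F j v -> Z (dl (i + j) (mU u v)).
Proof.
case: HRB => [[bl br] _ _ _].
move=> hu; elim: hu v.
- by move=> v _; rewrite (lin0 (br _)) dl0; apply: Z0.
- move=> k x hk hx v hv; elim: hv.
  + by rewrite (lin0 (bl _)) dl0; apply: Z0.
  + move=> l y hl hy.
    have [ek|nk] := eqVneq k i; have [el|nl] := eqVneq l j.
    * by rewrite -ek -el; apply: ZM.
    * apply: dl_low; apply: filt_le (filt_mul HRB (mono_filt hx) (mono_filt hy)) _.
      by move: hk hl nl; rewrite ek; clear; move=> ? ? /eqP; lia.
    * apply: dl_low; apply: filt_le (filt_mul HRB (mono_filt hx) (mono_filt hy)) _.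
      by move: hk hl nk; rewrite el; clear; move=> ? ? /eqP; lia.
    * apply: dl_low; apply: filt_le (filt_mul HRB (mono_filt hx) (mono_filt hy)) _.
      by move: hk hl nk; clear; move=> ? ? /eqP; lia.
  + by move=> c y z _ hy _ hz; rewrite (bl _ c y z) dl_comb; apply: Z_comb.
- by move=> c x y _ hx _ hy v hv; rewrite (br _ c x y) dl_comb; apply: Z_comb; auto.
Qed.

Lemma ZG k l : bnd k -> bnd l -> (exists N, forall n, (N < n)%N -> k n = 0) ->
  (exists N, forall n, (N < n)%N -> l n = 0) -> Z (gr_mul mU k l).
Proof.
case: HRB => [[bl br] _ _ _].
move=> bk bl' [N1 h1] [N2 h2].
have hz : forall m : 'I_(N1 + N2).+1, Z (dl m (gr_mul mU k l m)).
  move=> m; rewrite /gr_mul.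
  have hs : Z (fun n => \sum_(i < m.+1) dl m (mU (k i) (l (m - i)%N)) n).
    apply: Z_sum => i; have im : (i <= m)%N by rewrite -ltnS ltn_ord.
    by rewrite -{1}(subnKC im); apply: ZD.
  case: hs => x [hx gx]; exists x; split=> //; apply: geq_trans hx _.
  apply: geq_ext => n; rewrite /dl; case: eqP => // _.
  by rewrite big1.
have := Z_sum hz; case=> x [hx gx]; exists x; split=> //; apply: geq_trans hx _.
apply: geq_ext => n.
have teq : forall m : 'I_(N1 + N2).+1, dl m (gr_mul mU k l m) n =
   if (m : nat) == n then gr_mul mU k l n else 0.
  by move=> m; rewrite /dl eq_sym; case: eqP => [->|].
rewrite (eq_bigr _ (fun m _ => teq m)) sum_if; case: ltnP => // hn.
rewrite /gr_mul big1 // => i _.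
have im : (i <= n)%N by rewrite -ltnS ltn_ord.
case: (ltnP N1 i) => hi; first by rewrite h1 // (lin0 (br _)).
rewrite h2 ?(lin0 (bl _)) //.
by move: hn im hi; clear; lia.
Qed.

Lemma final y : g (mU' y y) = 0.
Proof.
have [N hN] := (P_elem y).2.
have [x [hx gx]] := ZG (P_bnd y) (P_bnd y) (ex_intro _ N hN) (ex_intro _ N hN).
have hxy : geq (Phi x) (Phi (mU' y y)) by apply: geq_trans hx (geq_sym (P_mul _ _)).
have := P_lin (-1) (mU' y y) x => hl.
have h0 : geq (Phi ((-1) *: mU' y y + x)) (fun _ => 0).
  apply: geq_trans hl _; apply: geq_trans (geq_comb (-1) (geq_refl _) hxy) _.
  by apply: geq_ext => n; rewrite scaleN1r addNr.
have := P_inj h0; rewrite scaleN1r addrC => /eqP; rewrite subr_eq0 => /eqP e.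
by rewrite -e.
Qed.

End Arg.

Lemma pre0 (K : fieldType) : is_preAs (@sc0 K) (@pr0 K).
Proof.
have sl : forall x : K^o, lin (sc0 x).
  by move=> x a y z; rewrite /sc0 /GRing.scale /= mulrDr mulrCA.
have sr : forall y : K^o, lin (fun x => sc0 x y).
  by move=> y a x z; rewrite /sc0 /GRing.scale /= mulrDl mulrA.
have p0 : forall (x : K^o), lin (fun _ : K^o => (0 : K^o)).
  by move=> _ a y z; rewrite scaler0 addr0.
split.
- by split.
- by split => x; apply: p0.
- by move=> x1 x2 x3; rewrite /sc0 /pr0 addr0 mulrA.
- by move=> x1 x2 x3; rewrite /sc0 /pr0 mulr0.
- by move=> x1 x2 x3; rewrite /pr0.
Qed.

Theorem corollary1 (K : fieldType) : ~ PBW_pair_RBAs_preAs K.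
Proof.
move=> H.
have HU := free_univ (@sc0 K) (@pr0 K).
have HU' := free_univ (fun _ _ : K^o => (0 : K^o)) (fun _ _ : K^o => (0 : K^o)).
have [Phi HP] := H _ _ _ (pre0 K) _ _ _ _ HU _ _ _ _ HU'.
pose f0 := fun a : K^o => (a : K) *: eB K.
have Hf0 : preAs_hom (fun _ _ : K^o => (0 : K^o)) (fun _ _ : K^o => (0 : K^o))
    (psi_succ (@mB K) (@RB K)) (psi_prec (@mB K) (@RB K)) f0.
  split.
  - by move=> a x y; rewrite /f0 scalerA -scalerDl.
  - by move=> x y; rewrite /f0 /psi_succ /RB mB0l scale0r.
  - by move=> x y; rewrite /f0 /psi_prec /RB mB0r scale0r.
case: HU' => _ _ /(_ _ _ _ f0 (B_RB K) Hf0) [[g [Hg Hgi]] _].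
have := final HU HP Hg (fiota _ _ (1 : K^o)).
case: (Hg) => _ m _; rewrite m Hgi /f0 scale1r eBff => e.
by move: (fB_neq0 K); rewrite e eqxx.
Qed.
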